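(* For any integers $1\le L\le K\le n$ and any $\epsilon\in(0,1]$, there is an $\epsilon$-net $\mathscr Y(\epsilon,n,K,L)$ of $\mathcal N(n,K,L)$ in Frobenius norm whose cardinality satisfies $$\ln|\mathscr Y(\epsilon,n,K,L)|\le n\ln K+K\ln L+(K^2+2nL)\ln\Big(\frac{9nL}{\epsilon}\Big).$$
   Context: Nested Block Model class: for integers $1\le L\le K\le n$, $\mathcal N(n,K,L)$ is the set of matrices $P\in[0,1]^{n\times n}$ for which there exist a clustering function $z:\{1,\dots,n\}\to\{1,\dots,K\}$ (communities), a clustering function $c:\{1,\dots,K\}\to\{1,\dots,L\}$ (meta-communities), a matrix $B\in[0,1]^{K\times K}$ and a matrix $H\in\mathbb R_+^{n\times L}$ such that, with $n_k=\#\{i:z(i)=k\}$, $$\sum_{i:\,z(i)=k}H_{i,l}=n_k\quad\text{for all }k\le K,\ l\le L,$$ and $$P_{ij}=B_{z(i),z(j)}\,H_{i,c(z(j))}\,H_{j,c(z(i))}\quad\text{for all }i,j.$$ An $\epsilon$-net of a set $\mathcal S$ of matrices in Frobenius norm is a finite set $\mathcal Y$ such that for every $S\in\mathcal S$ there is $Y\in\mathcal Y$ with $\|S-Y\|_F\le\epsilon$. *)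

(* Defs.v *)
From Stdlib Require Import Reals List Arith.
Import ListNotations.
Open Scope R_scope.

(* n x n real matrices are represented as functions nat -> nat -> R;
   only the entries with indices i, j < n are relevant (0-based indices). *)
Definition mat := nat -> nat -> R.

Definition rsum (n : nat) (f : nat -> R) : R :=
  fold_right Rplus 0 (map f (seq 0 n)).

Definition frob_dist (n : nat) (A B : mat) : R :=
  sqrt (rsum n (fun i => rsum n (fun j => (A i j - B i j) ^ 2))).

Definition csize (n : nat) (z : nat -> nat) (k : nat) : R :=
  INR (length (filter (fun i => Nat.eqb (z i) k) (seq 0 n))).

(* Nested Block Model class N(n,K,L), with communities 0..K-1 and
   meta-communities 0..L-1. *)
Definition NBM (n K L : nat) (P : mat) : Prop :=
  (forall i j, (i < n)%nat -> (j < n)%nat -> 0 <= P i j <= 1) /\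
  exists (z : nat -> nat) (c : nat -> nat) (B : mat) (H : mat),
    (forall i, (i < n)%nat -> (z i < K)%nat) /\
    (forall k, (k < K)%nat -> (c k < L)%nat) /\
    (forall k l, (k < K)%nat -> (l < K)%nat -> 0 <= B k l <= 1) /\
    (forall i l, (i < n)%nat -> (l < L)%nat -> 0 <= H i l) /\
    (forall k l, (k < K)%nat -> (l < L)%nat ->
        rsum n (fun i => if Nat.eqb (z i) k then H i l else 0) = csize n z k) /\
    (forall i j, (i < n)%nat -> (j < n)%nat ->
        P i j = B (z i) (z j) * H i (c (z j)) * H j (c (z i))).

Definition is_eps_net (n : nat) (eps : R) (S : mat -> Prop) (Y : list mat) : Prop :=
  forall P, S P -> exists M, In M Y /\ frob_dist n P M <= eps.

(* Main.v *)
Require Import Defs.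
From Stdlib Require Import Reals List Arith.
From Stdlib Require Import Lia Lra Psatz.
Import ListNotations.
Open Scope R_scope.

Fixpoint funs {A : Type} (d : nat) (vals : list A) (dflt : A) : list (nat -> A) :=
  match d with
  | O => [fun _ => dflt]
  | S d' => flat_map (fun f => map (fun v => fun i => if Nat.eqb i d' then v else f i) vals)
              (funs d' vals dflt)
  end.

Lemma length_flat_map_const {A B} (f : A -> list B) (l : list A) c :
  (forall x, length (f x) = c) -> length (flat_map f l) = (length l * c)%nat.
Proof. intros H; induction l; simpl; auto. rewrite length_app, H, IHl. reflexivity. Qed.

Lemma funs_length {A} d (vals : list A) dflt : length (funs d vals dflt) = (length vals ^ d)%nat.
Proof.
  induction d; simpl; auto.
  rewrite (length_flat_map_const _ _ (length vals)).
  - rewrite IHd. apply Nat.mul_comm.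
  - intros; apply length_map.
Qed.

Lemma funs_ex {A} d (vals : list A) dflt (Rel : nat -> A -> Prop) :
  (forall i, (i < d)%nat -> exists v, In v vals /\ Rel i v) ->
  exists g, In g (funs d vals dflt) /\ forall i, (i < d)%nat -> Rel i (g i).
Proof.
  induction d; intros Hex.
  - exists (fun _ => dflt); split; [left; auto | intros; lia].
  - destruct IHd as [g [Hg HR]]. { intros; apply Hex; lia. }
    destruct (Hex d ltac:(lia)) as [v [Hv Rv]].
    exists (fun i => if Nat.eqb i d then v else g i). split.
    + simpl. apply in_flat_map. exists g. split; auto. apply in_map_iff. exists v; auto.
    + intros i Hi. destruct (Nat.eqb_spec i d). subst; auto. apply HR; lia.
Qed.

Lemma fmax_ge l x : In x l -> x <= fold_right Rmax 0 l.
Proof.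
  induction l; simpl; [tauto|]. intros [->|H]. apply Rmax_l.
  eapply Rle_trans; [apply IHl; auto| apply Rmax_r].
Qed.

Lemma fmax_nonneg l : 0 <= fold_right Rmax 0 l.
Proof. induction l; simpl. lra. eapply Rle_trans; [apply IHl| apply Rmax_r]. Qed.

Lemma fmax_att l : fold_right Rmax 0 l = 0 \/ In (fold_right Rmax 0 l) l.
Proof.
  induction l; simpl; auto.
  destruct (Rle_dec a (fold_right Rmax 0 l)).
  - rewrite Rmax_right by auto. destruct IHl; auto.
  - rewrite Rmax_left by lra. auto.
Qed.

Lemma floor_ex m t : 0 <= t <= INR m -> exists j, (j <= m)%nat /\ INR j <= t <= INR j + 1.
Proof.
  revert t; induction m; intros t Ht.
  - exists 0%nat. simpl in *. split; [lia|lra].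
  - destruct (Rle_dec t (INR m)).
    + destruct (IHm t) as [j [Hj Hj']]. lra. exists j; split; auto.
    + exists m. rewrite S_INR in Ht. split; [lia|lra].
Qed.

Definition grid (m : nat) : list R := map (fun j => INR j / INR m) (seq 0 (S m)).

Lemma grid_ex m x : (0 < m)%nat -> 0 <= x <= 1 ->
  exists v, In v (grid m) /\ (0 <= v <= 1 /\ Rabs (v - x) <= / INR m).
Proof.
  intros Hm Hx. assert (Hm' : 0 < INR m) by (apply lt_0_INR; auto).
  destruct (floor_ex m (x * INR m)) as [j [Hj [H1 H2]]]. { split; nra. }
  exists (INR j / INR m). split.
  { apply in_map_iff. exists j. split; auto. apply in_seq; lia. }
  assert (INR j <= INR m) by (apply le_INR; auto).
  assert (0 <= INR j) by apply pos_INR.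
  set (w := / INR m).
  assert (Hw : INR m * w = 1) by (unfold w; field; lra).
  assert (Hw0 : 0 < w) by (unfold w; apply Rinv_0_lt_compat; lra).
  unfold Rdiv. fold w.
  assert (x = x * INR m * w) by (rewrite Rmult_assoc, Hw; ring).
  split; [split; nra|]. apply Rabs_le. split; nra.
Qed.

Lemma err3 a b c a' b' c' d : 0<=a<=1 -> 0<=b<=1 -> 0<=c<=1 -> 0<=a'<=1 -> 0<=b'<=1 -> 0<=c'<=1 ->
  Rabs (a - a') <= d -> Rabs (b-b') <= d -> Rabs (c-c') <= d -> Rabs (a*b*c - a'*b'*c') <= 3*d.
Proof.
  intros.
  replace (a*b*c - a'*b'*c') with ((a-a')*(b*c) + (a'*((b-b')*c) + a'*b'*(c-c'))) by ring.
  eapply Rle_trans; [apply Rabs_triang|].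
  eapply Rle_trans; [apply Rplus_le_compat; [apply Rle_refl| apply Rabs_triang]|].
  rewrite !Rabs_mult. rewrite (Rabs_right b), (Rabs_right c), (Rabs_right a'), (Rabs_right b') by lra.
  assert (0 <= Rabs (a-a')) by apply Rabs_pos.
  assert (0 <= Rabs (b-b')) by apply Rabs_pos.
  assert (0 <= Rabs (c-c')) by apply Rabs_pos.
  assert (Rabs (a-a') * (b*c) <= d).
  { assert (b*c <= 1) by nra. nra. }
  assert (a' * (Rabs (b-b') * c) <= d).
  { assert (a'*c <= 1) by nra. nra. }
  assert (a' * b' * Rabs (c-c') <= d).
  { assert (a'*b' <= 1) by nra. nra. }
  lra.
Qed.

Lemma rsum_le_gen (l : list nat) f g : (forall i, In i l -> f i <= g i) ->
  fold_right Rplus 0 (map f l) <= fold_right Rplus 0 (map g l).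
Proof.
  induction l; simpl; intros H. lra.
  apply Rplus_le_compat; auto.
Qed.

Lemma rsum_le n f g : (forall i, (i < n)%nat -> f i <= g i) -> rsum n f <= rsum n g.
Proof. intros H; apply rsum_le_gen. intros i Hi; apply in_seq in Hi; apply H; lia. Qed.

Lemma rsum_const_gen (l : list nat) c : fold_right Rplus 0 (map (fun _ => c) l) = INR (length l) * c.
Proof. induction l; simpl length; [simpl; ring|]. rewrite S_INR; simpl; rewrite IHl; ring. Qed.

Lemma rsum_const n c : rsum n (fun _ => c) = INR n * c.
Proof. unfold rsum. rewrite rsum_const_gen, length_seq. auto. Qed.

Lemma ln_le' x y : 0 < x -> x <= y -> ln x <= ln y.
Proof. intros H1 H2. destruct H2. left; apply ln_increasing; auto. subst; lra. Qed.

Lemma divmod_eq a b q : (b < q)%nat -> ((a*q + b)/q = a /\ (a*q+b) mod q = b)%nat.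
Proof.
  intros H. split.
  - symmetry. apply (Nat.div_unique _ _ _ b); lia.
  - symmetry. apply (Nat.mod_unique _ _ a); lia.
Qed.

Definition mk (K L : nat) (z c : nat -> nat) (b g : nat -> R) : mat :=
  fun i j => b (z i * K + z j)%nat * g (i * L + c (z j))%nat * g (j * L + c (z i))%nat.

Theorem lemma3 (n K L : nat) (eps : R) :
  (1 <= L)%nat -> (L <= K)%nat -> (K <= n)%nat ->
  0 < eps -> eps <= 1 ->
  exists Y : list mat,
    is_eps_net n eps (NBM n K L) Y /\
    ln (INR (length Y)) <=
      INR n * ln (INR K) + INR K * ln (INR L)
      + (INR K ^ 2 + 2 * INR n * INR L) * ln (9 * INR n * INR L / eps).
Proof.
  intros HL HLK HKn He He1.
  assert (Hn : 1 <= INR n) by (apply (le_INR 1); lia).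
  assert (HK : 1 <= INR K) by (apply (le_INR 1); lia).
  assert (HLr : 1 <= INR L) by (apply (le_INR 1); lia).
  set (t := 3 * INR n / eps).
  assert (Ht : 3 <= t).
  { unfold t. apply (Rmult_le_reg_r eps); auto. unfold Rdiv.
    rewrite Rmult_assoc, Rinv_l by lra. nra. }
  destruct (INR_unbounded t) as [N HN].
  destruct (floor_ex N t) as [j0 [_ [Hj1 Hj2]]]. lra.
  set (m := S j0).
  assert (Hm1 : t <= INR m) by (unfold m; rewrite S_INR; lra).
  assert (Hm2 : INR m <= t + 1) by (unfold m; rewrite S_INR; lra).
  assert (Hm0 : (0 < m)%nat) by (unfold m; lia).
  assert (Hmr : 0 < INR m) by lra.
  set (Y := flat_map (fun z => flat_map (fun c => flat_map (fun b =>
              map (fun g => mk K L z c b g) (funs (n*L) (grid m) 0))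
              (funs (K*K) (grid m) 0)) (funs K (seq 0 L) 0%nat)) (funs n (seq 0 K) 0%nat)).
  exists Y. split.
  - intros P [HP [z [c [B [H [Hz [Hc [HB [HH [_ HPeq]]]]]]]]]].
    set (mx := fun k l => fold_right Rmax 0 (map (fun i => if Nat.eqb (z i) k then H i l else 0) (seq 0 n))).
    set (G := fun i l => if Rle_dec (mx (z i) l) 0 then 0 else H i l / mx (z i) l).
    set (B' := fun k k' => B k k' * mx k (c k') * mx k' (c k)).
    assert (F1 : forall i l, (i < n)%nat -> H i l <= mx (z i) l).
    { intros i l Hi. unfold mx. apply fmax_ge. apply in_map_iff. exists i.
      rewrite Nat.eqb_refl. split; auto. apply in_seq; lia. }
    assert (F0 : forall k l, 0 <= mx k l) by (intros; apply fmax_nonneg).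
    assert (Fatt : forall k l, mx k l = 0 \/ exists i, (i < n)%nat /\ z i = k /\ H i l = mx k l).
    { intros k l. destruct (fmax_att (map (fun i => if Nat.eqb (z i) k then H i l else 0) (seq 0 n))) as [E|E].
      - left; exact E.
      - apply in_map_iff in E. destruct E as [i [Ei Hi]]. apply in_seq in Hi.
        destruct (Nat.eqb_spec (z i) k).
        + right. exists i. split; [lia|]. split; auto.
        + left. unfold mx. rewrite <- Ei. reflexivity. }
    assert (FG : forall i l, (i < n)%nat -> (l < L)%nat -> 0 <= G i l <= 1).
    { intros i l Hi Hl. unfold G. destruct (Rle_dec (mx (z i) l) 0). lra.
      assert (0 <= H i l) by (apply HH; auto). pose proof (F1 i l Hi).
      assert (Hp : 0 < mx (z i) l) by lra.
      unfold Rdiv. split.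
      - apply Rmult_le_pos; auto. left; apply Rinv_0_lt_compat; auto.
      - apply (Rmult_le_reg_r (mx (z i) l)); auto. rewrite Rmult_assoc, Rinv_l by lra. lra. }
    assert (FB : forall k k', 0 <= B' k k' <= 1).
    { intros k k'. unfold B'.
      destruct (Fatt k (c k')) as [E1|[i [Hi [Ei Hi']]]].
      { rewrite E1. rewrite Rmult_0_r, Rmult_0_l. lra. }
      destruct (Fatt k' (c k)) as [E2|[j [Hj [Ej Hj']]]].
      { rewrite E2. rewrite Rmult_0_r. lra. }
      rewrite <- Hi', <- Hj'. rewrite <- Ei, <- Ej. rewrite <- (HPeq i j Hi Hj). apply HP; auto. }
    assert (FP : forall i j, (i < n)%nat -> (j < n)%nat ->
               P i j = B' (z i) (z j) * G i (c (z j)) * G j (c (z i))).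
    { intros i j Hi Hj. rewrite HPeq by auto. unfold B', G.
      assert (Hl1 : (c (z j) < L)%nat) by (apply Hc, Hz; auto).
      assert (Hl2 : (c (z i) < L)%nat) by (apply Hc, Hz; auto).
      pose proof (F1 i _ Hi : H i (c (z j)) <= mx (z i) (c (z j))).
      pose proof (F1 j _ Hj : H j (c (z i)) <= mx (z j) (c (z i))).
      pose proof (HH i _ Hi Hl1). pose proof (HH j _ Hj Hl2).
      destruct (Rle_dec (mx (z i) (c (z j))) 0).
      { assert (E0 : H i (c (z j)) = 0) by lra. rewrite E0. ring. }
      destruct (Rle_dec (mx (z j) (c (z i))) 0).
      { assert (E0 : H j (c (z i)) = 0) by lra. rewrite E0. ring. }
      field. split; lra. }
    destruct (funs_ex n (seq 0 K) 0%nat (fun i v => v = z i)) as [zz [Hzz Ezz]].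
    { intros i Hi. exists (z i). split; auto. apply in_seq. specialize (Hz i Hi). lia. }
    destruct (funs_ex K (seq 0 L) 0%nat (fun k v => v = c k)) as [cc [Hcc Ecc]].
    { intros k Hk. exists (c k). split; auto. apply in_seq. specialize (Hc k Hk). lia. }
    destruct (funs_ex (K*K) (grid m) 0 (fun idx v => 0 <= v <= 1 /\
                 Rabs (v - B' (idx / K)%nat (idx mod K)%nat) <= / INR m)) as [bb [Hbb Ebb]].
    { intros idx _. apply grid_ex; auto. }
    destruct (funs_ex (n*L) (grid m) 0 (fun idx v => 0 <= v <= 1 /\
                 Rabs (v - G (idx / L)%nat (idx mod L)%nat) <= / INR m)) as [gg [Hgg Egg]].
    { intros idx Hidx. apply grid_ex; auto. apply FG.
      - apply Nat.Div0.div_lt_upper_bound; lia.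
      - apply Nat.mod_upper_bound; lia. }
    exists (mk K L zz cc bb gg). split.
    { unfold Y. apply in_flat_map. exists zz. split; auto.
      apply in_flat_map. exists cc. split; auto.
      apply in_flat_map. exists bb. split; auto.
      apply in_map_iff. exists gg. split; auto. }
    assert (Hent : forall i j, (i < n)%nat -> (j < n)%nat ->
              (P i j - mk K L zz cc bb gg i j) ^ 2 <= (3 * / INR m) ^ 2).
    { intros i j Hi Hj. unfold mk. rewrite (Ezz i Hi), (Ezz j Hj).
      pose proof (Hz i Hi). pose proof (Hz j Hj).
      rewrite (Ecc _ H0), (Ecc _ H1).
      pose proof (Hc _ H0). pose proof (Hc _ H1).
      destruct (divmod_eq (z i) (z j) K H1) as [D1 D2].
      destruct (divmod_eq i (c (z j)) L H3) as [D3 D4].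
      destruct (divmod_eq j (c (z i)) L H2) as [D5 D6].
      destruct (Ebb (z i * K + z j)%nat ltac:(nia)) as [Eb1 Eb2].
      destruct (Egg (i * L + c (z j))%nat ltac:(nia)) as [Eg1 Eg2].
      destruct (Egg (j * L + c (z i))%nat ltac:(nia)) as [Eg3 Eg4].
      rewrite D1, D2 in Eb2. rewrite D3, D4 in Eg2. rewrite D5, D6 in Eg4.
      rewrite FP by auto.
      assert (Hr : Rabs (B' (z i) (z j) * G i (c (z j)) * G j (c (z i)) -
                  bb (z i * K + z j)%nat * gg (i * L + c (z j))%nat * gg (j * L + c (z i))%nat)
                  <= 3 * / INR m).
      { apply err3; auto. rewrite Rabs_minus_sym; auto. rewrite Rabs_minus_sym; auto.
        rewrite Rabs_minus_sym; auto. }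
      rewrite <- pow2_abs. apply pow_incr. split; auto. apply Rabs_pos. }
    unfold frob_dist.
    eapply Rle_trans.
    { apply sqrt_le_1_alt. apply rsum_le. intros i Hi. apply rsum_le. intros j Hj. apply Hent; auto. }
    rewrite !rsum_const.
    set (w := / INR m).
    assert (Hw : INR m * w = 1) by (unfold w; field; lra).
    assert (Hw0 : 0 < w) by (unfold w; apply Rinv_0_lt_compat; lra).
    set (e' := / eps).
    assert (He' : eps * e' = 1) by (unfold e'; field; lra).
    assert (Hteq : t = 3 * INR n * e') by reflexivity.
    assert (H3 : 3 * INR n * w <= eps).
    { assert (E3 : 3 * INR n = t * eps) by (rewrite Hteq; replace (3 * INR n * e' * eps) with (3 * INR n * (eps * e')) by ring; rewrite He'; ring).
      rewrite E3. nra. }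
    replace (INR n * (INR n * (3 * w) ^ 2)) with ((3 * INR n * w) ^ 2) by ring.
    rewrite sqrt_pow2 by nra. exact H3.
  - assert (HlenY : length Y = (K^n * (L^K * ((S m)^(K*K) * (S m)^(n*L))))%nat).
    { unfold Y. rewrite (length_flat_map_const _ _ (L^K * ((S m)^(K*K) * (S m)^(n*L)))).
      { rewrite funs_length, length_seq; reflexivity. }
      intros z. rewrite (length_flat_map_const _ _ ((S m)^(K*K) * (S m)^(n*L))).
      { rewrite funs_length, length_seq; reflexivity. }
      intros c. rewrite (length_flat_map_const _ _ ((S m)^(n*L))).
      { rewrite funs_length. unfold grid; rewrite length_map, length_seq; reflexivity. }
      intros b. rewrite length_map, funs_length. unfold grid; rewrite length_map, length_seq; reflexivity. }
    rewrite HlenY, !mult_INR, !pow_INR.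
    set (M := INR (S m)).
    assert (HM : M = INR m + 1) by (unfold M; apply S_INR).
    assert (HM1 : 1 <= M) by lra.
    rewrite !ln_mult by (repeat apply Rmult_lt_0_compat; apply pow_lt; lra).
    rewrite !ln_pow by lra. rewrite !mult_INR.
    set (e' := / eps).
    assert (He' : eps * e' = 1) by (unfold e'; field; lra).
    assert (He'1 : 1 <= e') by nra.
    assert (Hteq : t = 3 * INR n * e') by reflexivity.
    assert (HX : M <= 9 * INR n * INR L / eps).
    { unfold Rdiv; fold e'. nra. }
    assert (HlnM : ln M <= ln (9 * INR n * INR L / eps)) by (apply ln_le'; lra).
    assert (HlnM0 : 0 <= ln M) by (rewrite <- ln_1; apply ln_le'; lra).
    assert (0 <= INR n * INR L) by nra.
    assert (0 <= INR K * INR K) by nra.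
    nra.
Qed.
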